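(* Let $p\ge1$ be an integer. For every $\bm U^0\in\mathbb V_h$ the equation $(\bm I+\mathbb A^2)\frac{\bm U^1-\bm U^0}{\tau}+\mathbb D(\bm U^0)\frac{\bm U^1+\bm U^0}{2}=0$ has a unique solution $\bm U^1\in\mathbb V_h$, and for every $n\ge1$ and all given $\bm U^{n-1},\bm U^n\in\mathbb V_h$ the equation $(\bm I+\mathbb A^2)\frac{\bm U^{n+1}-\bm U^n}{\tau}+\mathbb D\big(\frac{3\bm U^n-\bm U^{n-1}}{2}\big)\frac{\bm U^{n+1}+\bm U^n}{2}=0$ has a unique solution $\bm U^{n+1}\in\mathbb V_h$. That is, the LCN-MP scheme is uniquely solvable.
   Context: $\Omega=[x_L,x_R]\times[y_L,y_R]$, $l_1=x_R-x_L$, $l_2=y_R-y_L$, $N_1,N_2$ even, $h_r=l_r/N_r$, grid points $x_{j_1}=x_L+j_1h_1$, $y_{j_2}=y_L+j_2h_2$, $0\le j_r\le N_r-1$; $\tau>0$. $\mathbb V_h$ is the space of doubly periodic grid functions identified with vectors $\bm U=(U_{0,0},U_{1,0},\dots,U_{N_1-1,0},U_{0,1},\dots,U_{N_1-1,N_2-1})^T$. For $r=1,2$, $\mu_r=2\pi/l_r$, $g^{(1)}_k(x)=\frac1{N_1}\sum_{l=-N_1/2}^{N_1/2}\frac1{a_l}e^{\mathrm il\mu_1(x-x_k)}$, $a_l=1$ for $|l|<N_1/2$, $a_{\pm N_1/2}=2$ (similarly $g^{(2)}_k(y)$). $\bm D_s^x=(\frac{d^s}{dx^s}g^{(1)}_k(x_j))_{j,k=0}^{N_1-1}$,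 $\bm D_s^y=(\frac{d^s}{dy^s}g^{(2)}_k(y_j))_{j,k=0}^{N_2-1}$. $\mathbb A=\bm I_{N_2}\otimes\bm D_2^x+\bm D_2^y\otimes\bm I_{N_1}$, $\mathbb B=\bm I_{N_2}\otimes\bm D_3^x+\bm D_2^y\otimes\bm D_1^x$, $\mathbb L_h=\bm I_{N_2}\otimes\bm D_1^x+\bm D_1^y\otimes\bm I_{N_1}$ ($\otimes$ Kronecker product), $\mathbb D(\bm W)=\mathbb B+\mathbb L_h+\frac1{p+2}(\mathrm{diag}(\bm W^p)\mathbb L_h+\mathbb L_h\mathrm{diag}(\bm W^p))$ with $\bm W^p$ the componentwise power. *)

(* Defs.v *)
From HB Require Import structures.
From mathcomp Require Import all_boot all_order all_algebra.
From mathcomp Require Import all_classical all_reals all_analysis.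
From mathcomp Require Import mxtens.
Set Implicit Arguments. Unset Strict Implicit. Unset Printing Implicit Defensive.
Import Order.TTheory GRing.Theory Num.Theory.
Local Open Scope ring_scope.

Section Fourier.
Variable R : realType.

(* a_l for l in {-N/2, ..., N/2}, encoded by the ordinal l' = l + N/2 < N+1 *)
Definition a_coef (N : nat) (l : 'I_N.+1) : R :=
  if (nat_of_ord l == 0%N) || (nat_of_ord l == N) then 2 else 1.

Definition freq (N : nat) (l : 'I_N.+1) : R := (l : nat)%:R - (N./2)%:R.

Definition mesh (a b : R) (N : nat) : R := (b - a) / N%:R.
Definition gridpt (a b : R) (N j : nat) : R := a + j%:R * mesh a b N.

(* Trigonometric Lagrange basis function
     g_k(x) = 1/N sum_{l=-N/2}^{N/2} (1/a_l) e^{i l mu (x - x_k)},  mu = 2 pi/(b-a).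
   Since a_{-l} = a_l the imaginary parts cancel, so g_k is the real function
   1/N sum_l (1/a_l) cos(l mu (x - x_k)). *)
Definition gbasis (a b : R) (N k : nat) : R -> R :=
  fun x => (N%:R)^-1 * \sum_(l < N.+1)
     (a_coef l)^-1 * cos (freq l * (2 * pi / (b - a)) * (x - gridpt a b N k)).

Definition Dmat (s : nat) (a b : R) (N : nat) : 'M[R]_N :=
  \matrix_(j < N, k < N) derive1n s (gbasis a b N k) (gridpt a b N j).

(* Vectors of V_h: index j2 * N1 + j1 (j1 runs fastest), i.e. 'cV_(N2 * N1);
   the Kronecker product  X (x) Y  is  tensmx X Y. *)
Definition Amat (xL xR yL yR : R) (N1 N2 : nat) : 'M[R]_(N2 * N1) :=
  tensmx (1%:M : 'M[R]_(N2)) (Dmat 2 xL xR N1) + tensmx (Dmat 2 yL yR N2) (1%:M : 'M[R]_(N1)).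

Definition Bmat (xL xR yL yR : R) (N1 N2 : nat) : 'M[R]_(N2 * N1) :=
  tensmx (1%:M : 'M[R]_(N2)) (Dmat 3 xL xR N1) + tensmx (Dmat 2 yL yR N2) (Dmat 1 xL xR N1).

Definition Lmat (xL xR yL yR : R) (N1 N2 : nat) : 'M[R]_(N2 * N1) :=
  tensmx (1%:M : 'M[R]_(N2)) (Dmat 1 xL xR N1) + tensmx (Dmat 1 yL yR N2) (1%:M : 'M[R]_(N1)).

Definition diagpow (n : nat) (W : 'cV[R]_n) (p : nat) : 'M[R]_n :=
  diag_mx (\row_i (W i 0) ^+ p).

Definition Dop (xL xR yL yR : R) (N1 N2 p : nat) (W : 'cV[R]_(N2 * N1))
  : 'M[R]_(N2 * N1) :=
  let L := Lmat xL xR yL yR N1 N2 in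
  Bmat xL xR yL yR N1 N2 + L
  + ((p.+2)%:R)^-1 *: (diagpow W p *m L + L *m diagpow W p).

End Fourier.
Arguments Dop {R} xL xR yL yR N1 N2 p W.

(* Main.v *)
Require Import Defs.
From HB Require Import structures.
From mathcomp Require Import all_boot all_order all_algebra.
From mathcomp Require Import all_classical all_reals all_analysis.
From mathcomp Require Import mxtens.
From mathcomp Require Import ring lra.
Import Order.TTheory GRing.Theory Num.Theory.
Local Open Scope ring_scope.
Section S.
Variable R : realType.
Lemma is_derive_coslin (w b x : R) :
  is_derive x 1 (fun y => cos (w * y + b)) (w * cos (w * x + b + pi / 2)).
Proof.
have hg : is_derive x 1 (fun y : R => w * y + b) w.
  apply: is_derive_eq. 
  by rewrite addr0 -[RHS]mulr1.
have dg : derivable (fun y : R => w * y + b) x 1 by exact: ex_derive.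
have dc : derivable (@cos R) (w * x + b) 1 by exact: derivable_cos.
have -> : (fun y => cos (w * y + b)) = cos \o (fun y : R => w * y + b) by [].
apply: DeriveDef.
  apply/derivable1_diffP; apply: differentiable_comp; exact/derivable1_diffP.
rewrite -derive1E derive1_comp // derive1E derive_val derive1E derive_val.
by rewrite cosDpihalf mulrC.
Qed.

Lemma is_derive_ccoslin (c w b x : R) :
  is_derive x 1 (fun y => c * cos (w * y + b)) (c * (w * cos (w * x + b + pi / 2))).
Proof.
have := is_deriveZ c (is_derive_coslin w b x).
by [].
Qed.

Lemma derive1_cossum n (c w b : 'I_n -> R) :
  derive1 (fun x => \sum_(l < n) c l * cos (w l * x + b l))
  = fun x => \sum_(l < n) (c l * w l) * cos (w l * x + (b l + pi / 2)).
Proof.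
apply/funext => x.
rewrite derive1E -(fct_sumE _ _ (fun l y => c l * cos (w l * y + b l))).
have H := @is_derive_sum _ _ _ n (fun l y => c l * cos (w l * y + b l)) x 1 _
  (fun l => is_derive_ccoslin (c l) (w l) (b l) x).
rewrite (@derive_val _ _ _ _ _ _ _ H).
by apply: eq_bigr => l _; rewrite mulrA addrA.
Qed.

Lemma derive1n_cossum n (c w b : 'I_n -> R) s :
  derive1n s (fun x => \sum_(l < n) c l * cos (w l * x + b l))
  = fun x => \sum_(l < n) (c l * w l ^+ s) * cos (w l * x + (b l + s%:R * (pi / 2))).
Proof.
elim: s => [|s IH].
  by apply/funext => x; apply: eq_bigr => l _; rewrite expr0 mulr1 mul0r addr0.
rewrite derive1nS IH derive1_cossum; apply/funext => x; apply: eq_bigr => l _.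
set P := pi / 2.
congr (_ * cos _); first by rewrite exprSr; ring.
by rewrite mulrSr; ring.
Qed.

Lemma gbasisE (a b : R) N k :
  gbasis a b N k = fun x => \sum_(l < N.+1)
     ((N%:R)^-1 * (a_coef R l)^-1) * cos (freq R l * (2 * pi / (b - a)) * x
        + - (freq R l * (2 * pi / (b - a)) * gridpt a b N k)).
Proof.
apply/funext => x; rewrite /gbasis mulr_sumr; apply: eq_bigr => l _.
by rewrite mulrA mulrBr.
Qed.

Lemma DmatE s (a b : R) N j k :
  Dmat s a b N j k = \sum_(l < N.+1)
     ((N%:R)^-1 * (a_coef R l)^-1 * (freq R l * (2 * pi / (b - a))) ^+ s) *
     cos (freq R l * (2 * pi / (b - a)) * gridpt a b N j
        + (- (freq R l * (2 * pi / (b - a)) * gridpt a b N k) + s%:R * (pi / 2))).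
Proof. by rewrite mxE gbasisE derive1n_cossum. Qed.

Lemma cos_addnpi (y : R) s : cos (y + s%:R * pi) = (-1) ^+ s * cos y.
Proof.
elim: s => [|s IH]; first by rewrite mul0r addr0 expr0 mul1r.
by rewrite mulrSr mulrDl mul1r addrA (cosDpi (y + s%:R * pi)) IH exprS mulN1r mulNr.
Qed.

Lemma cos_refl (u v : R) s :
  cos (u + (- v + s%:R * (pi / 2))) = (-1) ^+ s * cos (v + (- u + s%:R * (pi / 2))).
Proof.
set P := pi / 2.
have hP : pi = P + P by rewrite /P; lra.
have -> : u + (- v + s%:R * P) = - ((v + - u) - s%:R * P) by ring.
rewrite cosN.
have -> : v + (- u + s%:R * P) = (v + - u - s%:R * P) + s%:R * pi by rewrite hP; ring.
rewrite cos_addnpi mulrA -exprMn mulrNN mulr1 expr1n mul1r //.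
Qed.

Lemma Dmat_tr s (a b : R) N : (Dmat s a b N)^T = (-1) ^+ s *: Dmat s a b N.
Proof.
apply/matrixP => j k; rewrite [LHS]mxE [RHS]mxE !DmatE mulr_sumr; apply: eq_bigr => l _.
by rewrite cos_refl mulrCA.
Qed.

Lemma tensmxN m n p q (X : 'M[R]_(m, n)) (Y : 'M[R]_(p, q)) : X *t (- Y) = - (X *t Y).
Proof. by apply/matrixP => i j; rewrite !mxE mulrN. Qed.

Lemma tensNmx m n p q (X : 'M[R]_(m, n)) (Y : 'M[R]_(p, q)) : (- X) *t Y = - (X *t Y).
Proof. by apply/matrixP => i j; rewrite !mxE mulNr. Qed.

Lemma entD n (M N : 'M[R]_n) i j : (M + N) i j = M i j + N i j.
Proof. by rewrite mxE. Qed.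
Lemma entZ n (a : R) (M : 'M[R]_n) i j : (a *: M) i j = a * M i j.
Proof. by rewrite mxE. Qed.
Lemma entD1 (M N : 'M[R]_1) i j : (M + N) i j = M i j + N i j.
Proof. by rewrite mxE. Qed.
Lemma entZ1 (a : R) (M : 'M[R]_1) i j : (a *: M) i j = a * M i j.
Proof. by rewrite mxE. Qed.

Lemma sq_ge0 {n} (v : 'cV[R]_n) : 0 <= (v^T *m v) 0 0.
Proof. rewrite mxE; apply: sumr_ge0 => i _; rewrite mxE -expr2; exact: sqr_ge0. Qed.

Lemma sq_eq0 n (v : 'cV[R]_n) : (v^T *m v) 0 0 = 0 -> v = 0.
Proof.
rewrite mxE => H; apply/matrixP => i j; rewrite [j]ord1 mxE.
have ge : forall k : 'I_n, true -> 0 <= v^T 0 k * v k 0.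
  by move=> k _; rewrite mxE -expr2; exact: sqr_ge0.
move: (Num.Theory.psumr_eq0P ge H) => /(_ i isT).
by rewrite mxE => /eqP; rewrite mulf_eq0 orbb => /eqP.
Qed.

Lemma key {n} {A Q : 'M[R]_n} {t h} : 0 < t -> A^T = A -> Q^T = - Q ->
  forall x : 'cV_n, (t *: (1%:M + A *m A) + h *: Q) *m x = 0 -> x = 0.
Proof.
move=> t0 hA hQ x Hx.
have E : (x^T *m ((t *: (1%:M + A *m A) + h *: Q) *m x)) 0 0 = 0.
  by rewrite Hx mulmx0 mxE.
have q0 : (x^T *m (Q *m x)) 0 0 = 0.
  have : (x^T *m (Q *m x)) 0 0 = ((x^T *m (Q *m x))^T) 0 0 by rewrite [RHS]mxE.
  rewrite !trmx_mul trmxK hQ mulmxN mulNmx -mulmxA [X in _ = X -> _]mxE.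
  set y := (x^T *m _) 0 0; lra.
have a : x^T *m (A *m A *m x) = (A *m x)^T *m (A *m x) by rewrite trmx_mul hA !mulmxA.
move: E; rewrite mulmxDl -!scalemxAl mulmxDl mul1mx mulmxDr -!scalemxAr mulmxDr a.
rewrite entD1 !entZ1 entD1 q0 mulr0 addr0 => /eqP; rewrite mulf_eq0 gt_eqF //= => /eqP E.
apply: sq_eq0; have := sq_ge0 x; have := sq_ge0 (A *m x); lra.
Qed.

Lemma inj_unit n (M : 'M[R]_n) : (forall x : 'cV_n, M *m x = 0 -> x = 0) -> M \in unitmx.
Proof.
move=> H; rewrite -unitmx_tr -row_free_unit -kermx_eq0; apply/eqP/row_matrixP => i.
rewrite row0.
have h : row i (kermx M^T) *m M^T = 0 by apply/sub_kermxP; exact: row_sub.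
apply: trmx_inj; rewrite trmx0; apply: H.
by have := congr1 trmx h; rewrite trmx_mul trmxK trmx0.
Qed.

Lemma uniq_sol n (P Q : 'M[R]_n) (t h : R) (U0 : 'cV_n) :
  (t *: P + h *: Q) \in unitmx ->
  exists! U1 : 'cV_n, P *m (t *: (U1 - U0)) + Q *m (h *: (U1 + U0)) = 0.
Proof.
move=> uM.
set r := t *: (P *m U0) - h *: (Q *m U0).
have iden : forall X, P *m (t *: (X - U0)) + Q *m (h *: (X + U0)) = (t *: P + h *: Q) *m X - r.
  move=> X; rewrite scalerBr scalerDr mulmxBr mulmxDr -!scalemxAr mulmxDl -!scalemxAl.
  by rewrite /r opprB addrACA [- _ + _]addrC.
exists (invmx (t *: P + h *: Q) *m r); split.
  by rewrite iden mulKVmx // subrr.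
move=> X; rewrite iden => /eqP; rewrite subr_eq0 => /eqP <-.
by rewrite mulKmx.
Qed.

Lemma skew_comb n (B L P : 'M[R]_n) (c : R) : B^T = - B -> L^T = - L -> P^T = P ->
  (B + L + c *: (P *m L + L *m P))^T = - (B + L + c *: (P *m L + L *m P)).
Proof.
move=> hB hL hP.
rewrite !linearD !linearZ /= !trmx_mul hP hL hB mulmxN mulNmx !scalerN.
by congr (_ + _); rewrite addrC.
Qed.
End S.

Theorem theorem3p2 (R : realType) (xL xR yL yR tau : R) (N1 N2 p : nat) :
  xL < xR -> yL < yR -> 0 < tau ->
  (0 < N1)%N -> ~~ odd N1 -> (0 < N2)%N -> ~~ odd N2 -> (1 <= p)%N ->
  let A := Amat xL xR yL yR N1 N2 in
  let D := Dop xL xR yL yR N1 N2 p in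
  (forall U0 : 'cV[R]_(N2 * N1),
     exists! U1 : 'cV[R]_(N2 * N1),
       (1%:M + A *m A) *m (tau^-1 *: (U1 - U0))
       + D U0 *m (2^-1 *: (U1 + U0)) = 0)
  /\
  (forall n : nat, (1 <= n)%N ->
   forall Unm1 Un : 'cV[R]_(N2 * N1),
     exists! Unp1 : 'cV[R]_(N2 * N1),
       (1%:M + A *m A) *m (tau^-1 *: (Unp1 - Un))
       + D (2^-1 *: (3%:R *: Un - Unm1)) *m (2^-1 *: (Unp1 + Un)) = 0).
Proof.
move=> hx hy ht hN1 oN1 hN2 oN2 hp A D.
have s2 : (-1) ^+ 2 = 1 :> R by rewrite expr2 mulrNN mulr1.
have s3 : (-1) ^+ 3 = -1 :> R by rewrite exprS s2 mulr1.
have hA : A^T = A.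
  by rewrite /A /Amat linearD /= !trmx_tens !trmx1 !Dmat_tr s2 !scale1r.
have hL : (Lmat xL xR yL yR N1 N2)^T = - Lmat xL xR yL yR N1 N2.
  by rewrite /Lmat linearD /= !trmx_tens !trmx1 !Dmat_tr expr1 !scaleN1r tensmxN tensNmx opprD.
have hB : (Bmat xL xR yL yR N1 N2)^T = - Bmat xL xR yL yR N1 N2.
  by rewrite /Bmat linearD /= !trmx_tens !trmx1 !Dmat_tr s2 s3 expr1 !scaleN1r scale1r !tensmxN opprD.
have hD : forall W, (D W)^T = - D W.
  move=> W; rewrite /D /Dop.
  apply: skew_comb => //; rewrite /diagpow tr_diag_mx //.
have key' : forall W, (tau^-1 *: (1%:M + A *m A) + 2^-1 *: D W) \in unitmx.
  move=> W; apply: inj_unit => x Hx.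
  have t0 : 0 < tau^-1 by rewrite invr_gt0.
  exact: (@key R _ _ _ _ _ t0 hA (hD W) x Hx).
split.
  by move=> U0; apply: uniq_sol; apply: key'.
by move=> n _ Unm1 Un; apply: uniq_sol; apply: key'.
Qed.
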